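(* Let $(X,\rho)$ be a metric space, $f:X\to X$ continuous, $x\in X$, $\ell\in\mathbb N$, $n\ge2$ an integer and $\varepsilon>0$. Then \[ C_\ell(x,n,\varepsilon)=\frac{n-1}{n}\Big[\mathrm{RR}_\ell(x,n,\varepsilon)-(\ell-1)\Lambda_\ell(x,n,\varepsilon)\Big]+\delta^C_\ell,\qquad \frac1n\le\delta^C_\ell<\frac{2\ell}{n}. \]
   Context: Bowen metric $\rho_\ell(y,z)=\max_{0\le i<\ell}\rho(f^iy,f^iz)$; correlation sum $C_\ell(x,n,\varepsilon)=n^{-2}\#\{(i,j):0\le i,j<n,\ \rho_\ell(f^ix,f^jx)\le\varepsilon\}$. Recurrence plot $R(x,n,\varepsilon)$: $n\times n$ matrix ($0\le i,j<n$) with entry $1$ iff $\rho(f^ix,f^jx)\le\varepsilon$. A line of length $\ell$: triple $(i,j,\ell)$ with $0\le i,j\le n-\ell$, $i\ne j$, entries $(i+k,j+k)=1$ for $0\le k<\ell$, entry $(i-1,j-1)=0$ if $\min\{i,j\}>0$, entry $(i+\ell,j+\ell)=0$ if $\max\{i,j\}<n-\ell$. $N_l$ = number of lines of length exactly $l$ (boundary lines included), $\lambda_l=N_l/(n^2-n)$, $\Lambda_\ell=\sum_{l\ge\ell}\lambda_l$, $\mathrm{RR}_\ell=\sum_{l\ge\ell}l\lambda_l$. *)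

(* Defs.v *)
From HB Require Import structures.
From mathcomp Require Import all_boot all_order all_algebra.
From mathcomp Require Import reals.
Set Implicit Arguments. Unset Strict Implicit. Unset Printing Implicit Defensive.
Import Order.TTheory GRing.Theory Num.Theory.
Local Open Scope ring_scope.

Section RecPlots.
Variables (R : realType) (X : Type) (rho : X -> X -> R) (f : X -> X).

Definition is_metric : Prop :=
  [/\ forall y z, rho y z = 0 <-> y = z,
      forall y z, rho y z = rho z y &
      forall y z w, rho y w <= rho y z + rho z w].

Definition rho_continuous : Prop :=
  forall y e, 0 < e -> exists2 dl, 0 < dl &
    forall z, rho y z < dl -> rho (f y) (f z) < e.

Definition bowen (l : nat) (y z : X) : R :=
  \big[Num.max/0]_(i < l) rho (iter i f y) (iter i f z).

Definition corr_sum (l : nat) (x : X) (n : nat) (eps : R) : R :=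
  (#|[set p : 'I_n * 'I_n |
       bowen l (iter p.1 f x) (iter p.2 f x) <= eps]|)%:R / (n ^ 2)%:R.

Definition rp (x : X) (eps : R) (i j : nat) : bool :=
  rho (iter i f x) (iter j f x) <= eps.

Definition is_line (x : X) (n : nat) (eps : R) (i j l : nat) : bool :=
  [&& (i <= n - l)%N, (j <= n - l)%N, i != j,
      [forall k : 'I_l, rp x eps (i + k) (j + k)],
      (0 < minn i j)%N ==> ~~ rp x eps i.-1 j.-1 &
      (maxn i j < n - l)%N ==> ~~ rp x eps (i + l) (j + l)].

Definition nlines (x : X) (n : nat) (eps : R) (l : nat) : nat :=
  #|[set p : 'I_n.+1 * 'I_n.+1 | is_line x n eps p.1 p.2 l]|.

Definition lambda_ (x : X) (n : nat) (eps : R) (l : nat) : R :=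
  (nlines x n eps l)%:R / (n ^ 2 - n)%:R.

(* Lambda_l = sum_{l' >= l} lambda_{l'}; lines have length <= n, so the sum
   is taken over l <= l' <= n (terms with l' > n are 0 since N_{l'} = 0). *)
Definition Lambda_ (x : X) (n : nat) (eps : R) (l : nat) : R :=
  \sum_(l <= l' < n.+1) lambda_ x n eps l'.

Definition RR_ (x : X) (n : nat) (eps : R) (l : nat) : R :=
  \sum_(l <= l' < n.+1) l'%:R * lambda_ x n eps l'.

End RecPlots.

(* Main.v *)
Require Import Defs.
From HB Require Import structures.
From mathcomp Require Import all_boot all_order all_algebra.
From mathcomp Require Import reals.
From mathcomp Require Import ring lra zify.
Set Implicit Arguments. Unset Strict Implicit. Unset Printing Implicit Defensive.

Fixpoint run (b : nat -> nat -> bool) (n fuel i j : nat) : nat :=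
  match fuel with
  | 0 => 0
  | fuel'.+1 => if [&& i < n, j < n & b i j] then (run b n fuel' i.+1 j.+1).+1 else 0
  end.

Lemma run_ge b n fuel : forall i j k, 0 < k ->
  (k <= run b n fuel i j) <->
  [/\ k <= fuel, i + k <= n, j + k <= n & forall t, t < k -> b (i+t) (j+t)].
Proof.
elim: fuel => [|fu IH] i j k k0 /=.
  split; first by lia. by case=> /=; lia.
case: ifP => [/and3P[hi hj hb]|hc].
  case: k k0 => [//|k] _; rewrite ltnS.
  case: k => [|k].
    split=> // _; split; try lia. by move=> [|t] //; rewrite !addn0.
  rewrite IH //; split.
    case=> h1 h2 h3 h4; split; try lia.
    move=> [|t] ht; first by rewrite !addn0.
    by have := h4 t ht; rewrite ?addnS ?addSn.
  case=> h1 h2 h3 h4; split; try lia.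
  move=> t ht; have := h4 t.+1; rewrite ?addnS ?addSn; apply; lia.
split; first by lia.
case=> h1 h2 h3 h4; move: hc; have := h4 0 k0; rewrite !addn0 => ->.
rewrite andbT => /negbT/negP; case; apply/andP; split; lia.
Qed.

Definition rr b n i j := run b n n.+1 i j.

Lemma rr_ge b n i j k : 0 < k ->
  (k <= rr b n i j) <->
  [/\ i + k <= n, j + k <= n & forall t, t < k -> b (i+t) (j+t)].
Proof.
move=> k0; rewrite /rr run_ge //; split; first by case.
case=> *; split=> //; lia.
Qed.

Lemma eq_nat_ge (a c : nat) : (forall k, 0 < k -> (k <= a) <-> (k <= c)) -> a = c.
Proof.
move=> h; apply/eqP; rewrite eqn_leq; apply/andP; split.
  case: a h => [//|a] h; by apply/h.
case: c h => [//|c] h; by apply/h.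
Qed.

Lemma rr_le b n i j : rr b n i j <= n.
Proof.
case E: (rr b n i j) => [//|k].
have : k.+1 <= rr b n i j by rewrite E.
case/rr_ge=> // *; lia.
Qed.

Lemma rr_rec b n i j : rr b n i j =
  if [&& i < n, j < n & b i j] then (rr b n i.+1 j.+1).+1 else 0.
Proof.
case: ifP => [/and3P[hi hj hb]|hc].
  apply: eq_nat_ge => [[|k]] // _.
  rewrite ltnS; case: k => [|k].
    split=> // _; apply/rr_ge => //; split; try lia.
    by move=> [|t] //; rewrite !addn0.
  rewrite !rr_ge //; split.
    case=> h2 h3 h4; split; try lia.
    move=> t ht; have := h4 t.+1; rewrite ?addnS ?addSn; apply; lia.
  case=> h2 h3 h4; split; try lia.
  move=> [|t] ht; first by rewrite !addn0.
  by have := h4 t ht; rewrite ?addnS ?addSn.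
case E: (rr b n i j) => [//|k].
have : 1 <= rr b n i j by rewrite E.
case/rr_ge=> // h1 h2 h3; move: hc; have := h3 0 isT; rewrite !addn0 => ->.
rewrite andbT => /negbT/negP; case; apply/andP; split; lia.
Qed.

Definition lineb (b : nat -> nat -> bool) n i j L :=
  [&& (i <= n - L)%N, (j <= n - L)%N, i != j,
      [forall k : 'I_L, b (i + k) (j + k)],
      (0 < minn i j)%N ==> ~~ b i.-1 j.-1 &
      (maxn i j < n - L)%N ==> ~~ b (i + L) (j + L)].

Definition startb (b : nat -> nat -> bool) i j := (0 < minn i j) ==> ~~ b i.-1 j.-1.

Lemma forallP_nat (b : nat -> nat -> bool) i j L :
  reflect (forall t, t < L -> b (i+t) (j+t)) [forall k : 'I_L, b (i + k) (j + k)].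
Proof.
apply: (iffP forallP) => h.
  by move=> t ht; have := h (Ordinal ht).
by move=> [k hk]; apply: h.
Qed.

Lemma lineb_iff b n i j L : 0 < L -> L <= n ->
  lineb b n i j L = [&& i != j, startb b i j & rr b n i j == L].
Proof.
move=> L0 Ln; rewrite /lineb /startb.
apply/idP/idP.
  case/and5P=> h1 h2 -> /forallP_nat h4 /andP[-> h6] /=.
  apply/eqP; apply: eq_nat_ge => k k0; rewrite rr_ge //.
  split; last by move=> kL; split; try lia; move=> t tk; apply: h4; lia.
  case=> h7 h8 h9; rewrite leqNgt; apply/negP => Lk.
  have : maxn i j < n - L by lia.
  move/(implyP h6)/negP; apply; have := h9 L Lk; done.
case/and3P=> hne hst /eqP hr.
have : L <= rr b n i j by rewrite hr.
case/rr_ge => // h1 h2 h3.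
rewrite hne hst /=.
apply/and4P; split; try lia.
  by apply/forallP_nat.
apply/implyP => hm; apply/negP => hb.
have : L.+1 <= rr b n i j.
  apply/rr_ge => //; split; try lia.
  move=> t; rewrite ltnS leq_eqVlt; case/orP => [/eqP->|]; [done|exact: h3].
by rewrite hr ltnn.
Qed.

Lemma rr_n b n i j : (n <= i) || (n <= j) -> rr b n i j = 0.
Proof. by move=> h; rewrite rr_rec; case: ifP => // /and3P[]; lia. Qed.

Lemma telescope b n l : 0 < l ->
 \sum_(0<=i<n.+1) \sum_(0<=j<n.+1) ((i != j) && startb b i j) * ((rr b n i j).+1 - l)
 = \sum_(0<=i<n.+1) \sum_(0<=j<n.+1) ((i != j) && (l <= rr b n i j)).
Proof.
move=> l0.
set phi := fun i j => (rr b n i j).+1 - l.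
pose B i j := ((i != j) && (0 < rr b n i j)) * phi i.+1 j.+1.
pose N i j := ((i != j) && ~~ startb b i j) * phi i j.
have step1 : \sum_(0<=i<n.+1) \sum_(0<=j<n.+1) ((i != j) && (l <= rr b n i j))
   + \sum_(0<=i<n.+1) \sum_(0<=j<n.+1) B i j
   = \sum_(0<=i<n.+1) \sum_(0<=j<n.+1) ((i != j) && startb b i j) * phi i j
   + \sum_(0<=i<n.+1) \sum_(0<=j<n.+1) N i j.
  rewrite -!big_split /=; apply: eq_bigr => i _; rewrite -!big_split /=.
  apply: eq_bigr => j _; rewrite /B /N /phi.
  case: (i != j) => /=; last by [].
  rewrite [rr b n i j]rr_rec.
  case: ifP => _ /=; last by case: (startb b i j) => /=; lia.
  by case: (startb b i j) => /=; lia.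
have step3 : \sum_(0<=i<n.+1) \sum_(0<=j<n.+1) B i j = \sum_(0<=i<n.+1) \sum_(0<=j<n.+1) N i j.
  rewrite big_nat_recr //= [X in _ = X]big_nat_recl //=.
  have -> : \sum_(0<=j<n.+1) B n j = 0.
    by rewrite big1 // => j _; rewrite /B rr_n ?leqnn // andbF.
  have -> : \sum_(0<=j<n.+1) N 0 j = 0.
    by rewrite big1 // => j _; rewrite /N /startb min0n /= ?andbF ?mul0n.
  rewrite addn0 add0n; apply: eq_big_nat => i /andP[_ hi].
  rewrite big_nat_recr //= [X in _ = X]big_nat_recl //=.
  have -> : B i n = 0 by rewrite /B rr_n ?leqnn ?orbT // andbF.
  have -> : N i.+1 0 = 0 by rewrite /N /startb minn0 /= ?andbF ?mul0n.
  rewrite addn0 add0n; apply: eq_big_nat => j /andP[_ hj].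
  rewrite /B /N /startb /phi eqSS /=.
  rewrite [rr b n i j]rr_rec hi hj /=.
  by rewrite minnSS /=; case: (b i j).
by move: step1; rewrite step3 => /addIn.
Qed.

Lemma sum_L r l m : \sum_(l <= L < m) (L.+1 - l) * (r == L) =
  if (l <= r < m) then r.+1 - l else 0.
Proof.
elim: m => [|m IH]; first by rewrite big_geq //; case: ifP => //; lia.
case: (leqP l m) => hlm.
  rewrite big_nat_recr //= IH.
  case: (eqVneq r m) => [->|hne].
    rewrite ltnn leqnn hlm /= muln1 add0n //.
  rewrite muln0 addn0; move/negbTE: hne; case: ifP; case: ifP => //; lia.
rewrite big_geq //; case: ifP => //; lia.
Qed.

Lemma lines_count b n l : 0 < l ->
  \sum_(l <= L < n.+1) (L.+1 - l) *
     \sum_(0<=i<n.+1) \sum_(0<=j<n.+1) lineb b n i j L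
  = \sum_(0<=i<n.+1) \sum_(0<=j<n.+1) ((i != j) && (l <= rr b n i j)).
Proof.
move=> l0; rewrite -telescope //.
under eq_bigr do rewrite big_distrr /=.
rewrite exchange_big /=; apply: eq_bigr => i _.
under eq_bigr do rewrite big_distrr /=.
rewrite exchange_big /=; apply: eq_bigr => j _.
rewrite (@eq_big_nat _ _ _ _ _ _ (fun L => ((i != j) && startb b i j) * ((L.+1 - l) * (rr b n i j == L)))); last first.
  move=> L /andP[h1 h2]; rewrite lineb_iff; [|lia|lia].
  by case: (i != j); case: (startb b i j); case: (rr b n i j == L); rewrite /= ?muln0 ?mul0n ?mul1n ?muln1.
rewrite -big_distrr /= sum_L; congr (_ * _).
have := rr_le b n i j; case: ifP => //; lia.
Qed.

Definition okb (b : nat -> nat -> bool) l i j := [forall t : 'I_l, b (i+t) (j+t)].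

Lemma W_small b n l : 0 < l ->
  \sum_(0<=i<n.+1) \sum_(0<=j<n.+1) ((i != j) && (l <= rr b n i j))
  = \sum_(0<=i<n) \sum_(0<=j<n) ((i != j) && [&& i + l <= n, j + l <= n & okb b l i j]).
Proof.
move=> l0; rewrite big_nat_recr //=.
have -> : \sum_(0<=j<n.+1) ((n != j) && (l <= rr b n n j)) = 0.
  by rewrite big1 // => j _; rewrite rr_n ?leqnn //= leqNgt l0 andbF.
rewrite addn0; apply: eq_big_nat => i /andP[_ hi].
rewrite big_nat_recr //= rr_n ?leqnn ?orbT //= leqNgt l0 andbF addn0.
apply: eq_big_nat => j _; congr (nat_of_bool (_ && _)).
apply/idP/idP.
  by case/rr_ge => // h1 h2 /forallP_nat h3; rewrite h1 h2.
by case/and3P => h1 h2 /forallP_nat h3; apply/rr_ge.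
Qed.

Lemma sum_eq_nat i m : \sum_(0<=j<m) (i == j) = (i < m).
Proof.
elim: m => [|m IH]; first by rewrite big_geq.
rewrite big_nat_recr //= IH.
case: (ltngtP i m) => h.
- by rewrite ltnS ltnW.
- by rewrite ltnS leqNgt h.
- by rewrite h ltnSn.
Qed.

Lemma sum_ge_nat c m : \sum_(0<=i<m) (c <= i) = m - c.
Proof.
elim: m => [|m IH]; first by rewrite big_geq.
rewrite big_nat_recr //= IH; case: leqP; lia.
Qed.

Lemma D_bounds (b : nat -> nat -> bool) n l : 0 < l -> 0 < n -> (forall i, b i i) ->
  let D := \sum_(0<=i<n) \sum_(0<=j<n)
     (okb b l i j && ~~ ((i != j) && [&& i + l <= n & j + l <= n])) in
  n <= D /\ D < 2 * l * n.
Proof.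
move=> l0 n0 hb D; split.
  apply: (@leq_trans (\sum_(0<=i<n) \sum_(0<=j<n) (i == j))).
    rewrite (@eq_big_nat _ _ _ _ _ _ (fun _ => 1)); last first.
      by move=> i /andP[_ hi]; rewrite sum_eq_nat hi.
    by rewrite sum_nat_const_nat subn0 muln1.
  apply: leq_sum => i _; apply: leq_sum => j _.
  case: (eqVneq i j) => [->|] //=.
  suff -> : okb b l j j by [].
  by apply/forallP => t; apply: hb.
pose K := \sum_(0<=i<n) (n < i + l).
have hK : K <= l.-1.
  rewrite /K (@eq_big_nat _ _ _ _ _ _ (fun i => nat_of_bool (n.+1 - l <= i))); last first.
    by move=> i _; congr (nat_of_bool _); apply/idP/idP; lia.
  rewrite sum_ge_nat; lia.
apply: (@leq_ltn_trans (\sum_(0<=i<n) \sum_(0<=j<n) ((i == j) + (n < i + l) + (n < j + l)))).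
  apply: leq_sum => i _; apply: leq_sum => j _.
  case: (okb b l i j) => //=; case: (eqVneq i j) => //= _.
  case: leqP; case: leqP => //=; lia.
rewrite (@eq_big_nat _ _ _ _ _ _ (fun i => 1 + n * (n < i + l) + K)); last first.
  move=> i /andP[_ hi]; rewrite big_split /= big_split /= sum_eq_nat hi.
  by rewrite sum_nat_const_nat subn0.
rewrite big_split /= big_split /= sum_nat_const_nat -big_distrr /= -/K sum_nat_const_nat !subn0.
nia.
Qed.

Lemma card_pair m (P : nat -> nat -> bool) :
  #|[set p : 'I_m * 'I_m | P p.1 p.2]| = \sum_(0<=i<m) \sum_(0<=j<m) P i j.
Proof.
rewrite -sum1_card big_mkcond /=.
rewrite (eq_bigr (fun p : 'I_m * 'I_m => nat_of_bool (P p.1 p.2))); last first.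
  by move=> p _; rewrite in_set; case: (P _ _).
rewrite -(pair_bigA _ (fun i j : 'I_m => nat_of_bool (P i j))) /=.
rewrite big_mkord; apply: eq_bigr => i _; by rewrite big_mkord.
Qed.

Lemma C_split b n l :
  \sum_(0<=i<n) \sum_(0<=j<n) okb b l i j =
  \sum_(0<=i<n) \sum_(0<=j<n) ((i != j) && [&& i + l <= n, j + l <= n & okb b l i j])
  + \sum_(0<=i<n) \sum_(0<=j<n)
     (okb b l i j && ~~ ((i != j) && [&& i + l <= n & j + l <= n])).
Proof.
rewrite -big_split; apply: eq_bigr => i _; rewrite -big_split; apply: eq_bigr => j _ /=.
by case: (okb b l i j); case: (i != j); case: (i + l <= n); case: (j + l <= n).
Qed.

Import Order.TTheory GRing.Theory Num.Theory.
Local Open Scope ring_scope.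

Theorem mainTheorem9 (R : realType) (X : Type) (rho : X -> X -> R)
  (f : X -> X) (x : X) (l n : nat) (eps : R) :
  is_metric rho -> rho_continuous rho f ->
  (1 <= l)%N -> (2 <= n)%N -> 0 < eps ->
  exists delta : R,
    corr_sum rho f l x n eps =
      (n%:R - 1) / n%:R *
        (RR_ rho f x n eps l - (l%:R - 1) * Lambda_ rho f x n eps l) + delta
    /\ 1 / n%:R <= delta /\ delta < 2 * l%:R / n%:R.
Proof.
move=> [hm0 hsym htri] _ l1 n2 eps0.
set b := rp rho f x eps.
have rho0 : forall y, rho y y = 0 by move=> y; apply/hm0.
have rho_ge0 : forall y z, 0 <= rho y z.
  move=> y z; have := htri y z y; rewrite rho0 (hsym z y); lra.
have hb : forall i, b i i by move=> i; rewrite /b /rp rho0 ltW.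
have hbow : forall i j, (bowen rho f l (iter i f x) (iter j f x) <= eps) = okb b l i j.
  move=> i j; rewrite /bowen /okb; apply/bigmax_leP/forallP.
    case=> _ h t; have := h t isT; by rewrite /b /rp -!iterD (addnC t i) (addnC t j).
  move=> h; split; first exact: ltW.
  move=> t _; have := h t; by rewrite /b /rp -!iterD (addnC t i) (addnC t j).
have hC : corr_sum rho f l x n eps =
    (\sum_(0<=i<n) \sum_(0<=j<n) okb b l i j)%:R / (n ^ 2)%:R.
  rewrite /corr_sum (card_pair n (fun i j => bowen rho f l (iter i f x) (iter j f x) <= eps)).
  congr (_%:R / _); apply: eq_bigr => i _; apply: eq_bigr => j _; by rewrite hbow.
have hN : forall L, nlines rho f x n eps L =
    (\sum_(0<=i<n.+1) \sum_(0<=j<n.+1) lineb b n i j L)%N.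
  move=> L; rewrite /nlines (card_pair n.+1 (fun i j => is_line rho f x n eps i j L)).
  by [].
have hRR : RR_ rho f x n eps l - (l%:R - 1) * Lambda_ rho f x n eps l =
   (\sum_(l <= L < n.+1) (L.+1 - l) * nlines rho f x n eps L)%N%:R / (n ^ 2 - n)%:R.
  rewrite /RR_ /Lambda_ /lambda_ mulr_sumr -sumrB natr_sum mulr_suml.
  apply: eq_big_nat => L /andP[hl _]; rewrite natrM (natrB _ (leqW hl)).
  rewrite -[L.+1]addn1 natrD. ring.
have l0 : (0 < l)%N by [].
have n0 : (0 < n)%N by lia.
have hS : (\sum_(l <= L < n.+1) (L.+1 - l) * nlines rho f x n eps L)%N =
   (\sum_(0<=i<n) \sum_(0<=j<n) ((i != j) && [&& i + l <= n, j + l <= n & okb b l i j]))%N.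
  rewrite -W_small // -lines_count //; apply: eq_big_nat => L _; by rewrite hN.
have [hD1 hD2] := D_bounds l0 n0 hb.
move: hD1 hD2; set D := (\sum_(0<=i<n) \sum_(0<=j<n) _)%N => hD1 hD2.
move: hS hC hRR; rewrite C_split -/D.
set W := (\sum_(0<=i<n) \sum_(0<=j<n) _)%N => hS hC hRR.
exists (D%:R / (n ^ 2)%:R).
have nR : (n%:R : R) != 0 by rewrite pnatr_eq0 -lt0n.
have n1R : (n%:R - 1 : R) != 0.
  by rewrite subr_eq0 (_ : 1 = 1%:R) // eqr_nat; apply/eqP; lia.
have hn2 : (0 : R) < (n ^ 2)%:R by rewrite ltr0n; lia.
split; last split.
- have hle : (n <= n ^ 2)%N by nia.
  rewrite hC hRR hS natrD (natrB _ hle).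
  rewrite natrX; field; rewrite nR /= expr2.
  have -> : (n%:R * n%:R - n%:R : R) = n%:R * (n%:R - 1) by ring.
  by rewrite mulf_neq0.
- have -> : 1 / n%:R = (n%:R : R) / (n ^ 2)%:R by rewrite natrX; field.
  by rewrite ler_pM2r ?invr_gt0 // ler_nat.
- have -> : 2 * l%:R / n%:R = ((2 * l * n)%N%:R : R) / (n ^ 2)%:R.
    by rewrite natrX !natrM; field.
  by rewrite ltr_pM2r ?invr_gt0 // ltr_nat.
Qed.
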